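(* Let $d\in\mathbb{N}$. Then for any integer $k\ge19^{2d-1}+1$ and any support preserving map $F\colon S_{\ell_\infty^k}\to S_{\ell_1^k}$ (not assumed continuous), we have $\omega_F(\tfrac1d)\ge\tfrac12$. In particular, there is no sequence $(F_k\colon S_{\ell_\infty^k}\to S_{\ell_1^k})_{k=1}^\infty$ of equi-uniformly continuous support preserving maps.
   Context: $S_{\ell_p^k}$ is the unit sphere of $(\mathbb{R}^k,\|\cdot\|_p)$. $\mathrm{supp}(x)=\{i:x_i\neq0\}$; $F$ is support preserving if $\mathrm{supp}(F(x))=\mathrm{supp}(x)$ for all $x$. $\omega_F(t)=\sup\{\|F(x)-F(y)\|_1:\|x-y\|_\infty\le t\}$. A sequence $(F_k)$ is equi-uniformly continuous if for every $\varepsilon>0$ there is $\delta>0$ with $\omega_{F_k}(\delta)<\varepsilon$ for all $k$. *)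

(* Defs.v *)
From HB Require Import structures.
From mathcomp Require Import all_boot all_order all_algebra.
From mathcomp Require Import boolp classical_sets reals.
Set Implicit Arguments. Unset Strict Implicit. Unset Printing Implicit Defensive.
Import Order.TTheory GRing.Theory Num.Theory.
Local Open Scope ring_scope.
Local Open Scope classical_set_scope.

Definition linf_norm (R : realType) (k : nat) (x : 'I_k -> R) : R :=
  \big[Num.max/0]_(i < k) `|x i|.

Definition l1_norm (R : realType) (k : nat) (x : 'I_k -> R) : R :=
  \sum_(i < k) `|x i|.

Definition sphere_inf (R : realType) (k : nat) : set ('I_k -> R) :=
  [set x | linf_norm x = 1].

(* F maps S_{l_inf^k} into S_{l_1^k}; values of F off the sphere are irrelevant. *)
Definition maps_sphere (R : realType) (k : nat) (F : ('I_k -> R) -> ('I_k -> R)) :=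
  forall x, sphere_inf x -> l1_norm (F x) = 1.

Definition support_preserving (R : realType) (k : nat)
  (F : ('I_k -> R) -> ('I_k -> R)) :=
  forall x, sphere_inf x -> forall i, (F x i != 0) = (x i != 0).

Definition omega (R : realType) (k : nat) (F : ('I_k -> R) -> ('I_k -> R)) (t : R) : R :=
  sup [set r | exists x y, [/\ sphere_inf x, sphere_inf y,
        linf_norm (fun i => x i - y i) <= t & r = l1_norm (fun i => F x i - F y i)]].

(* Main.v *)
Require Import Defs.
From HB Require Import structures.
From mathcomp Require Import all_boot all_order all_algebra.
From mathcomp Require Import boolp classical_sets reals.
From mathcomp Require Import zify ring lra.
Import Order.TTheory GRing.Theory Num.Theory.
Local Open Scope ring_scope.

Section Aux.
Variable n : nat.
Definition xorS (A B : {set 'I_n}) : {set 'I_n} := [set t | (t \in A) (+) (t \in B)].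
Definition flipS (B : {set 'I_n}) (t : 'I_n) := xorS B [set t].

Lemma xorS_flip u B t : xorS u (flipS B t) = xorS (xorS u B) [set t].
Proof. by apply/setP => s; rewrite !inE addbA. Qed.

Lemma flipSK t : involutive (flipS^~ t).
Proof. by move=> B; apply/setP => s; rewrite !inE -addbA addbb addbF. Qed.

Lemma card_xor1 S t : #|xorS S [set t]| = if t \in S then #|S|.-1 else #|S|.+1.
Proof.
case: ifP => tS.
- have -> : xorS S [set t] = S :\ t.
    apply/setP => s; rewrite !inE; case: (eqVneq s t) => [->|ne]; by rewrite ?tS ?addbF.
  by rewrite (cardsD1 t S) tS.
- have -> : xorS S [set t] = t |: S.
    apply/setP => s; rewrite !inE; case: (eqVneq s t) => [->|ne]; by rewrite ?tS ?addbF ?orbF.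
  by rewrite cardsU1 tS.
Qed.
End Aux.
Arguments xorS {n}.
Arguments flipS {n}.

Section Linf.
Variable R : realType.
Variable k : nat.
Lemma linf_le (x : 'I_k -> R) b : 0 <= b -> (forall i, `|x i| <= b) -> linf_norm x <= b.
Proof.
move=> b0 H; rewrite /linf_norm; elim/big_ind: _ => //.
  by move=> u v hu hv; rewrite ge_max hu hv.
Qed.
Lemma linf_ge (x : 'I_k -> R) i : `|x i| <= linf_norm x.
Proof. by rewrite /linf_norm (bigD1 i) //= le_max lexx. Qed.
End Linf.
Arguments linf_ge {R k}.
Arguments linf_le {R k}.
Lemma flipSKK n (B : {set 'I_n}) t : flipS (flipS B t) t = B.
Proof. by apply/setP => s; rewrite !inE -addbA addbb addbF. Qed.
Lemma flipS_inv n (t : 'I_n) : involutive (flipS^~ t).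
Proof. by move=> B; exact: flipSKK. Qed.

Section Main.
Variable R : realType.
Variables (d k : nat).
Hypothesis hd : (0 < d)%N.
Hypothesis hk : (2 ^ (3 * d) <= k)%N.

Definition pp (i : 'I_k) : {set 'I_(3 * d)} := nth (finset.set0) (enum {: {set 'I_(3 * d)}}) i.
Definition lev (m : nat) := (m - 2 * d)%N.
Definition Lv (B : {set 'I_(3 * d)}) (i : 'I_k) := lev #|xorS (pp i) B|.
Definition XX (B : {set 'I_(3 * d)}) (i : 'I_k) : R := (Lv B i)%:R / d%:R.

Lemma Lv_le B i : (Lv B i <= d)%N.
Proof.
rewrite /Lv /lev; have := max_card (mem (xorS (pp i) B)); rewrite card_ord => h; apply: leq_trans (leq_sub2r _ h) _; lia.
Qed.

Lemma card_sets : #|{: {set 'I_(3 * d)}}| = (2 ^ (3 * d))%N.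
Proof.
have -> : #|{: {set 'I_(3 * d)}}| = #|powerset [set: 'I_(3 * d)]|.
  apply: eq_card => A; by rewrite !inE finset.subsetT.
by rewrite card_powerset cardsT card_ord.
Qed.

Lemma pp_surj (u : {set 'I_(3 * d)}) : exists i : 'I_k, pp i = u.
Proof.
have hi : (index u (enum {: {set 'I_(3 * d)}}) < k)%N.
  apply: leq_trans hk; rewrite -card_sets cardE index_mem mem_enum //.
exists (Ordinal hi); by rewrite /pp /= nth_index // mem_enum.
Qed.

Lemma Lv_top B : exists i, Lv B i = d.
Proof.
have [i hi] := pp_surj (~: B); exists i; rewrite /Lv hi.
have -> : xorS (~: B) B = [set: 'I_(3 * d)] by apply/setP => t; rewrite !inE; case: (t \in B).
rewrite cardsT card_ord /lev; lia.
Qed.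

Lemma dpos : (0 : R) < d%:R. Proof. by rewrite ltr0n. Qed.

Lemma XX_ge0 B i : 0 <= XX B i.
Proof. by rewrite /XX divr_ge0 // ?ler0n. Qed.

Lemma XX_sphere B : sphere_inf (XX B).
Proof.
rewrite /sphere_inf /=; apply/eqP; rewrite eq_le; apply/andP; split.
  apply: linf_le => // i; rewrite ger0_norm ?XX_ge0 // /XX ler_pdivrMr ?dpos // mul1r ler_nat.
  exact: Lv_le.
have [i hi] := Lv_top B; apply: (le_trans _ (linf_ge _ i)).
by rewrite ger0_norm ?XX_ge0 // /XX hi divff // gt_eqF ?dpos.
Qed.

Lemma XX_neq0 B i : (XX B i != 0) = (0 < Lv B i)%N.
Proof. by rewrite /XX mulf_eq0 invr_eq0 !pnatr_eq0 negb_or -lt0n (gtn_eqF hd) andbT. Qed.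

Lemma natdist (a b : nat) : (a <= b.+1)%N -> (b <= a.+1)%N -> `|a%:R - b%:R : R| <= 1.
Proof.
rewrite -!(ler_nat R) !mulrSr => h1 h2; rewrite ler_norml; apply/andP; split; lra.
Qed.

Lemma XX_near B t : linf_norm (fun i => XX B i - XX (flipS B t) i) <= d%:R^-1.
Proof.
apply: linf_le => [|i]; first by rewrite invr_ge0 ler0n.
rewrite /XX -mulrBl normrM [X in _ * X]ger0_norm ?invr_ge0 ?ler0n //.
apply: ler_piMl; first by rewrite invr_ge0 ler0n.
rewrite /Lv xorS_flip card_xor1; set m := #|xorS (pp i) B|.
by case: ifP => _; apply: natdist; rewrite /lev; lia.
Qed.

Definition ee B t i : R :=
  (Lv (flipS B t) i < Lv B i)%N%:R - (Lv B i < Lv (flipS B t) i)%N%:R.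

Lemma ee_flip B t i : ee (flipS B t) t i = - ee B t i.
Proof. by rewrite /ee flipSKK opprB. Qed.

Lemma ee_drift B i : (0 < Lv B i)%N -> d%:R <= \sum_t ee B t i.
Proof.
rewrite /ee /Lv; under eq_bigr do rewrite xorS_flip.
set S := xorS (pp i) B => hS.
have -> : \sum_t ((lev #|xorS S [set t]| < lev #|S|)%N%:R
          - (lev #|S| < lev #|xorS S [set t]|)%N%:R) =
          \sum_(t < 3 * d) ((t \in S)%:R *+ 2 - 1) :> R.
  apply: eq_bigr => t _; rewrite card_xor1; move: hS; rewrite /lev => hS.
  case: ifP => tS.
    have -> : (#|S|.-1 - 2 * d < #|S| - 2 * d)%N by lia.
    have /negbTE -> : ~~ (#|S| - 2 * d < #|S|.-1 - 2 * d)%N by rewrite -leqNgt; lia.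
    by rewrite /=; lra.
  have /negbTE -> : ~~ (#|S|.+1 - 2 * d < #|S| - 2 * d)%N by rewrite -leqNgt; lia.
  have -> : (#|S| - 2 * d < #|S|.+1 - 2 * d)%N by lia.
  by rewrite /=; lra.
rewrite sumrB sumrMnl sumr_const card_ord -natr_sum.
have -> : (\sum_(t < 3 * d) (t \in S : nat) = #|S|)%N.
  by rewrite -sum1_card [RHS]big_mkcond /=; apply: eq_bigr => t _; case: (t \in S).
have h : ((2 * d).+1 <= #|S|)%N by move: hS; rewrite /lev; lia.
move: h; rewrite -(ler_nat R) => h; rewrite mulrSr natrM in h.
lra.
Qed.

Variable F : ('I_k -> R) -> ('I_k -> R).
Hypotheses (HF1 : maps_sphere F) (HF2 : support_preserving F).

Definition mu B i := `|F (XX B) i|.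
Definition TV B t := l1_norm (fun i => F (XX B) i - F (XX (flipS B t)) i).

Lemma TV_ge B t : \sum_i ee B t i * (mu B i - mu (flipS B t) i) <= TV B t.
Proof.
rewrite /TV /l1_norm; apply: ler_sum => i _.
set a := F _ i; set b := F _ i.
have := ler_dist_dist a b; rewrite ler_norml /ee /mu -/a -/b.
case: (_ < _)%N; case: (_ < _)%N => /= /andP[h1 h2];
  rewrite ?mulr1n ?mulr0n; lra.
Qed.

Lemma mu_zero B i : Lv B i = 0%N -> mu B i = 0.
Proof.
move=> h; have := HF2 _ (XX_sphere B) i; rewrite XX_neq0 h ltnn.
by rewrite /mu; move/negbFE/eqP => ->; rewrite normr0.
Qed.

Lemma sum_mu B : \sum_i mu B i = 1.
Proof. exact: HF1 _ (XX_sphere B). Qed.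

Lemma key_sum :
  \sum_(B : {set 'I_(3 * d)}) (d%:R *+ 2 : R) <= \sum_(B : {set 'I_(3 * d)}) \sum_(t < 3 * d) TV B t.
Proof.
have step1 : \sum_(B : {set 'I_(3 * d)}) \sum_(t < 3 * d) \sum_i ee B t i * (mu B i - mu (flipS B t) i)
    <= \sum_(B : {set 'I_(3 * d)}) \sum_(t < 3 * d) TV B t.
  by apply: ler_sum => B _; apply: ler_sum => t _; exact: TV_ge.
apply: le_trans step1.
have E1 : \sum_(B : {set 'I_(3 * d)}) \sum_(t < 3 * d) \sum_i ee B t i * (mu B i - mu (flipS B t) i)
   = \sum_(B : {set 'I_(3 * d)}) \sum_(t < 3 * d) \sum_i ee B t i * mu B i
     - \sum_(B : {set 'I_(3 * d)}) \sum_(t < 3 * d) \sum_i ee B t i * mu (flipS B t) i.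
  rewrite -sumrB; apply: eq_bigr => B _; rewrite -sumrB; apply: eq_bigr => t _.
  rewrite -sumrB; apply: eq_bigr => i _; by rewrite mulrBr.
have E2 : \sum_(B : {set 'I_(3 * d)}) \sum_(t < 3 * d) \sum_i ee B t i * mu (flipS B t) i
   = - \sum_(B : {set 'I_(3 * d)}) \sum_(t < 3 * d) \sum_i ee B t i * mu B i.
  rewrite exchange_big /= [in RHS]exchange_big /= -sumrN; apply: eq_bigr => t _.
  rewrite (reindex_inj (inv_inj (@flipS_inv _ t))) /= -sumrN; apply: eq_bigr => B _.
  rewrite flipSKK -sumrN; apply: eq_bigr => i _; by rewrite ee_flip mulNr.
have E3 : \sum_(B : {set 'I_(3 * d)}) \sum_(t < 3 * d) \sum_i ee B t i * mu B i
   = \sum_(B : {set 'I_(3 * d)}) \sum_i (\sum_(t < 3 * d) ee B t i) * mu B i.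
  apply: eq_bigr => B _; rewrite exchange_big; apply: eq_bigr => i _; by rewrite mulr_suml.
have E4 : forall B, d%:R <= \sum_i (\sum_(t < 3 * d) ee B t i) * mu B i.
  move=> B; have hs : d%:R * \sum_i mu B i = d%:R by rewrite sum_mu mulr1.
  rewrite -{1}hs mulr_sumr; apply: ler_sum => i _.
  case: (posnP (Lv B i)) => h; first by rewrite mu_zero // !mulr0.
  by apply: ler_wpM2r; [exact: normr_ge0 | exact: ee_drift].
rewrite E1 E2 opprK E3.
have : \sum_(B : {set 'I_(3 * d)}) d%:R <=
       \sum_(B : {set 'I_(3 * d)}) \sum_i (\sum_(t < 3 * d) ee B t i) * mu B i.
  by apply: ler_sum => B _; exact: E4.
move=> h; rewrite sumrMnl mulr2n [X in _ <= X]mulr2n; exact: lerD.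
Qed.

Lemma key : exists x y, [/\ sphere_inf x, sphere_inf y,
   linf_norm (fun i => x i - y i) <= d%:R^-1 &
   2^-1 <= l1_norm (fun i => F x i - F y i)].
Proof.
apply: contrapT => Hn.
have H : forall B t, TV B t < 2^-1.
  move=> B t; rewrite ltNge; apply/negP => h; apply: Hn.
  exists (XX B), (XX (flipS B t)); split => //; [exact: XX_sphere|exact: XX_sphere|exact: XX_near].
have h1 := key_sum.
have co : (\sum_(t < 3 * d) (2^-1 : R)) = 2^-1 *+ (3 * d).
  by rewrite sumr_const card_ord.
have h2 : \sum_(B : {set 'I_(3 * d)}) \sum_(t < 3 * d) TV B t <=
          \sum_(B : {set 'I_(3 * d)}) (2^-1 *+ (3 * d) : R).
  by apply: ler_sum => B _; rewrite -co; apply: ler_sum => t _; exact: ltW (H B t).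
have h3 := le_trans h1 h2.
have : \sum_(B : {set 'I_(3 * d)}) (2^-1 *+ (3 * d) : R) < \sum_(B : {set 'I_(3 * d)}) (d%:R *+ 2).
  apply: ltr_sum.
    by apply/hasP; exists finset.set0; rewrite ?mem_index_enum.
  move=> B _; rewrite mulr2n -(mulr_natr (2^-1 : R) (3 * d)) natrM; have := dpos; lra.
by rewrite ltNge h3.
Qed.

End Main.


Lemma omega_ge (R : realType) k (F : ('I_k -> R) -> ('I_k -> R)) t x y :
  maps_sphere F -> sphere_inf x -> sphere_inf y ->
  linf_norm (fun i => x i - y i) <= t ->
  l1_norm (fun i => F x i - F y i) <= omega F t.
Proof.
move=> HF sx sy hxy; rewrite /omega; apply: ub_le_sup; last by exists x, y; split.
exists 2 => r [x' [y' [sx' sy' _ ->]]].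
rewrite /l1_norm (le_trans (ler_sum _ (fun i _ => ler_normB (F x' i) (F y' i)))) //.
by rewrite big_split /= -!/(l1_norm _) HF // HF.
Qed.

Arguments omega_ge {R k F t x y}.

Lemma pow_le e : (8 ^ e <= 361 ^ e)%N.
Proof. by elim: e => // e IH; rewrite !expnS leq_mul. Qed.

Lemma thr d : (0 < d)%N -> (2 ^ (3 * d) <= 19 ^ (2 * d - 1) + 1)%N.
Proof.
case: d => // e _.
have -> : (2 * e.+1 - 1 = (2 * e).+1)%N by lia.
rewrite expnM (expnS 19) expnM; apply: leq_trans (leq_addr _ _).
rewrite expnS leq_mul //; exact: pow_le.
Qed.

Theorem theorem4p4 (R : realType) (d : nat) (hd : (0 < d)%N) :
  (forall (k : nat), (19 ^ (2 * d - 1) + 1 <= k)%N ->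
     forall F : ('I_k -> R) -> ('I_k -> R),
       maps_sphere F -> support_preserving F ->
       omega F (d%:R)^-1 >= 2^-1)
  /\
  ~ (exists Fk : forall k : nat, ('I_k -> R) -> ('I_k -> R),
       (forall k : nat, (0 < k)%N -> maps_sphere (Fk k) /\ support_preserving (Fk k)) /\
       (forall eps : R, 0 < eps -> exists delta : R, 0 < delta /\
          forall k : nat, (0 < k)%N -> omega (Fk k) delta < eps)).
Proof.
split.
  move=> k hk F H1 H2.
  have hk' : (2 ^ (3 * d) <= k)%N by apply: leq_trans (thr _ hd) hk.
  have [x [y [sx sy hxy h]]] := key _ _ _ hd hk' _ H1 H2.
  exact: le_trans h (omega_ge H1 sx sy hxy).
case=> Fk [HF Hu].
have [delta [dpos Hd]] := Hu 2^-1 (ltac:(by rewrite invr_gt0 ltr0n)).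
pose e := (Num.bound delta^-1).+1.
have epos : (0 < e)%N by [].
have hde : e%:R^-1 <= delta.
  have hi : 0 <= delta^-1 by rewrite invr_ge0 ltW.
  have hb := archi_boundP hi.
  rewrite -[X in _ <= X]invrK lef_pV2 ?posrE ?invr_gt0 ?ltr0n //.
  apply: ltW; apply: lt_le_trans hb _; rewrite ler_nat; exact: leqnSn.
pose k := (19 ^ (2 * e - 1) + 1)%N.
have kpos : (0 < k)%N by rewrite /k addn1.
have [H1 H2] := HF k kpos.
have hk' : (2 ^ (3 * e) <= k)%N by exact: thr.
have [x [y [sx sy hxy h]]] := key _ _ _ epos hk' _ H1 H2.
have := Hd k kpos; rewrite ltNge => /negP; apply.
exact: le_trans h (omega_ge H1 sx sy (le_trans hxy hde)).
Qed.
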